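(* For every problem $\alpha$ of QHC, $\neg\nabla\alpha\Leftrightarrow\neg\alpha\Leftrightarrow\nabla\neg\alpha$.
   Context: QHC is a two-sorted first-order calculus. Its only terms are individual variables. Every formula is either a problem (denoted by Greek letters $\alpha,\beta,\gamma,\dots$) or a proposition (denoted by Latin letters $p,q,\dots$). Atomic formulas are proposition variables $p(t_1,\dots,t_n)$ (of proposition type), problem variables $\pi(t_1,\dots,t_n)$ (of problem type), and the constants $0$ (a proposition, classical falsity) and $\bot$ (a problem, intuitionistic absurdity). Propositions are closed under the classical connectives $\land,\lor,\to$ and quantifiers $\exists,\forall$; problems are closed under the intuitionistic connectives $\land,\lor,\to$ and quantifiers $\exists,\forall$ (the same symbols are used, distinguished by the type of the arguments). $\neg p$ abbreviates $p\to 0$, $\neg\alpha$ abbreviates $\alpha\to\bot$, and $\leftrightarrow$ is defined as usual. There are two type-conversion operators: if $p$ is a proposition then $!p$ is a problem, and if $\alpha$ is a problem then $?\alpha$ is a proposition. Deductive system of QHC: all axioms and rules of classical predicate logic applied to all propositions; all postulates and rules of intuitionistic predicate logic applied to all problems; the rules $p\,/\,!p$ and $\alpha\,/\,?\alpha$; and the schemas $?!p\to p$; $\alpha\to\, !?\alpha$; $!(p\to q)\to(!p\to !q)$; $?(\alpha\to\beta)\to(?\alpha\to ?\beta)$; $!0\to\bot$; $?(\alpha\land\beta)\leftrightarrow ?\alpha\land ?\beta$; $?(\alpha\lor\beta)\leftrightarrow ?\alpha\lor ?\beta$; $?\bot\to 0$; $?\exists x\,\alpha(x)\leftrightarrow\exists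 x\,?\alpha(x)$; $?\forall x\,\alpha(x)\to\forall x\,?\alpha(x)$ (usual variable side conditions implicit). $\vdash A$ means $A$ is derivable in QHC; $A\Rightarrow B$ means $\vdash A\to B$ and $A\Leftrightarrow B$ means $\vdash A\leftrightarrow B$ (with $A,B$ of the same type); $A\vdash B$ means $B$ is derivable in QHC from the premise $A$. Notation: $\Box p := ?!p$ (a proposition) and $\nabla\alpha := !?\alpha$ (a problem). QC and QH denote classical and intuitionistic predicate calculus. *)

(* Defs.v *)
(* Deep embedding of the two-sorted calculus QHC.
   Individual variables are de Bruijn indices (nat); the only terms are
   variables, so substitution of terms for variables is a renaming. *)
From Stdlib Require Import List.

Inductive sort : Type := Prp | Prb .

Inductive form : sort -> Type :=
| Atom : forall s : sort, nat -> list nat -> form s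
    (* Atom Prp p ts = proposition variable p(ts); Atom Prb pi ts = problem variable *)
| Zero : form Prp
| Bot  : form Prb
| And  : forall s, form s -> form s -> form s
| Or   : forall s, form s -> form s -> form s
| Imp  : forall s, form s -> form s -> form s
| Ex   : forall s, form s -> form s           (* binds de Bruijn index 0 *)
| All  : forall s, form s -> form s
| Bang : form Prp -> form Prb
| Ques : form Prb -> form Prp.

Arguments And {s} _ _.
Arguments Or {s} _ _.
Arguments Imp {s} _ _.
Arguments Ex {s} _.
Arguments All {s} _.

Definition up (f : nat -> nat) : nat -> nat :=
  fun n => match n with 0 => 0 | S k => S (f k) end.

Fixpoint ren {s} (f : nat -> nat) (A : form s) : form s :=
  match A with
  | Atom s p ts => Atom s p (map f ts)
  | Zero => Zero
  | Bot => Bot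
  | And A B => And (ren f A) (ren f B)
  | Or A B => Or (ren f A) (ren f B)
  | Imp A B => Imp (ren f A) (ren f B)
  | Ex A => Ex (ren (up f) A)
  | All A => All (ren (up f) A)
  | Bang A => Bang (ren f A)
  | Ques A => Ques (ren f A)
  end.

Definition lift {s} (A : form s) : form s := ren S A.
Definition inst {s} (t : nat) (A : form s) : form s :=
  ren (fun n => match n with 0 => t | S k => k end) A.

Definition fal (s : sort) : form s :=
  match s with Prp => Zero | Prb => Bot end.
Definition Neg {s} (A : form s) : form s := Imp A (fal s).
Definition Iff {s} (A B : form s) : form s := And (Imp A B) (Imp B A).

Definition Box (p : form Prp) : form Prp := Ques (Bang p).
Definition Nabla (a : form Prb) : form Prb := Bang (Ques a).

(* Derivability in QHC (Hilbert style).  Intuitionistic predicate logic for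
   both sorts, plus double negation elimination for propositions (classical
   logic), plus the QHC rules and schemas. *)
Inductive Prv : forall s, form s -> Prop :=
| ax_K   : forall s (A B : form s), Prv s (Imp A (Imp B A))
| ax_S   : forall s (A B C : form s),
    Prv s (Imp (Imp A B) (Imp (Imp A (Imp B C)) (Imp A C)))
| ax_andE1 : forall s (A B : form s), Prv s (Imp (And A B) A)
| ax_andE2 : forall s (A B : form s), Prv s (Imp (And A B) B)
| ax_andI  : forall s (A B : form s), Prv s (Imp A (Imp B (And A B)))
| ax_orI1  : forall s (A B : form s), Prv s (Imp A (Or A B))
| ax_orI2  : forall s (A B : form s), Prv s (Imp B (Or A B))
| ax_orE   : forall s (A B C : form s),
    Prv s (Imp (Imp A C) (Imp (Imp B C) (Imp (Or A B) C)))
| ax_efq   : forall s (A : form s), Prv s (Imp (fal s) A)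
| ax_dne   : forall (A : form Prp), Prv Prp (Imp (Neg (Neg A)) A)
| ax_allE  : forall s (A : form s) (t : nat), Prv s (Imp (All A) (inst t A))
| ax_exI   : forall s (A : form s) (t : nat), Prv s (Imp (inst t A) (Ex A))
| r_mp     : forall s (A B : form s), Prv s (Imp A B) -> Prv s A -> Prv s B
| r_allI   : forall s (C A : form s), Prv s (Imp (lift C) A) -> Prv s (Imp C (All A))
| r_exE    : forall s (C A : form s), Prv s (Imp A (lift C)) -> Prv s (Imp (Ex A) C)
| r_bang   : forall p, Prv Prp p -> Prv Prb (Bang p)
| r_ques   : forall a, Prv Prb a -> Prv Prp (Ques a)
| ax_qb    : forall p, Prv Prp (Imp (Ques (Bang p)) p)
| ax_bq    : forall a, Prv Prb (Imp a (Bang (Ques a)))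
| ax_bK    : forall p q, Prv Prb (Imp (Bang (Imp p q)) (Imp (Bang p) (Bang q)))
| ax_qK    : forall a b, Prv Prp (Imp (Ques (Imp a b)) (Imp (Ques a) (Ques b)))
| ax_b0    : Prv Prb (Imp (Bang Zero) Bot)
| ax_qand  : forall a b, Prv Prp (Iff (Ques (And a b)) (And (Ques a) (Ques b)))
| ax_qor   : forall a b, Prv Prp (Iff (Ques (Or a b)) (Or (Ques a) (Ques b)))
| ax_qbot  : Prv Prp (Imp (Ques Bot) Zero)
| ax_qex   : forall a, Prv Prp (Iff (Ques (Ex a)) (Ex (Ques a)))
| ax_qall  : forall a, Prv Prp (Imp (Ques (All a)) (All (Ques a))).

Arguments Prv {s} _.

(* Main.v *)
Require Import Defs.

Section L.
Context {s : sort}.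
Lemma k_c (A B : form s) : Prv B -> Prv (Imp A B).
Proof. intro H. exact (r_mp _ _ _ (ax_K _ B A) H). Qed.
Lemma mpH (H X Y : form s) : Prv (Imp H (Imp X Y)) -> Prv (Imp H X) -> Prv (Imp H Y).
Proof. intros h1 h2. exact (r_mp _ _ _ (r_mp _ _ _ (ax_S _ H X Y) h2) h1). Qed.
Lemma idI (A : form s) : Prv (Imp A A).
Proof. apply (mpH A (Imp A A) A). apply ax_K. apply ax_K. Qed.
Lemma compH (H A B C : form s) : Prv (Imp H (Imp A B)) -> Prv (Imp H (Imp B C)) -> Prv (Imp H (Imp A C)).
Proof.
  intros h1 h2.
  assert (h3 : Prv (Imp H (Imp A (Imp B C)))).
  { apply (mpH _ _ _ (k_c _ _ (ax_K _ (Imp B C) A)) h2). }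
  apply (mpH _ _ _ (mpH _ _ _ (k_c _ _ (ax_S _ A B C)) h1) h3).
Qed.
Lemma comp (A B C : form s) : Prv (Imp A B) -> Prv (Imp B C) -> Prv (Imp A C).
Proof. intros h1 h2. apply (mpH A B C (k_c _ _ h2) h1). Qed.
Lemma liftR (A B C : form s) : Prv (Imp B C) -> Prv (Imp (Imp A B) (Imp A C)).
Proof. intro h. apply (compH _ _ B). apply idI. apply k_c, h. Qed.
Lemma liftL (A B C : form s) : Prv (Imp A B) -> Prv (Imp (Imp B C) (Imp A C)).
Proof. intro h. apply (compH _ _ B). apply k_c, h. apply idI. Qed.
Lemma iffI (A B : form s) : Prv (Imp A B) -> Prv (Imp B A) -> Prv (Iff A B).
Proof. intros h1 h2. exact (r_mp _ _ _ (r_mp _ _ _ (ax_andI _ _ _) h1) h2). Qed.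
End L.

Lemma key (a : form Prb) : Prv (Imp (Nabla (Neg a)) (Imp (Nabla a) Bot)).
Proof.
  assert (hq : Prv (Imp (Ques (Imp a Bot)) (Imp (Ques a) Zero))).
  { apply (comp _ _ _ (ax_qK a Bot)). apply liftR. apply ax_qbot. }
  pose proof (r_mp _ _ _ (ax_bK _ _) (r_bang _ hq)) as h1.
  pose proof (comp _ _ _ h1 (ax_bK (Ques a) Zero)) as h2.
  exact (comp _ _ _ h2 (liftR _ _ _ ax_b0)).
Qed.

Theorem corollary2p10 (a : form Prb) :
  Prv (Iff (Neg (Nabla a)) (Neg a)) /\ Prv (Iff (Neg a) (Nabla (Neg a))).
Proof.
  split; apply iffI.
  - apply liftL. apply ax_bq.
  - exact (comp _ _ _ (ax_bq (Neg a)) (key a)).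
  - apply ax_bq.
  - apply (compH _ _ (Nabla a)). apply k_c, ax_bq. apply key.
Qed.
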